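(* Let $k\geq 4$ and $j\geq k+2$ be integers. Then $$j+\Big\lfloor\frac{j-1}{k+1}\Big\rfloor\leq R_k^{\mathcal{CA}}(k+3,j)\leq j-1+\Big\lceil\frac{j-1}{k}\Big\rceil,$$ where $\mathcal{CA}$ is the class of cacti.
   Context: All graphs are finite and simple. For a graph $G$ and a nonnegative integer $k$, a $k$-sparse $j$-set is a set of $j$ vertices of $G$ inducing a subgraph of maximum degree at most $k$; a $k$-dense $i$-set is a set of $i$ vertices of $G$ that is $k$-sparse in the complement of $G$. For a graph class $\mathcal{G}$, $R_k^{\mathcal{G}}(i,j)$ is the smallest natural number $n$ such that every graph on $n$ vertices in $\mathcal{G}$ has either a $k$-dense $i$-set or a $k$-sparse $j$-set. A cactus is a graph (not necessarily connected) in which every block is a cycle, a single edge, or a single vertex. *)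

(* Defs.v *)
From mathcomp Require Import all_boot.
From Stdlib Require Import ClassicalEpsilon.
Set Implicit Arguments. Unset Strict Implicit. Unset Printing Implicit Defensive.

Definition simple_graph (T : finType) (e : rel T) : Prop :=
  symmetric e /\ irreflexive e.

Definition deg_in (T : finType) (e : rel T) (S : {set T}) (x : T) : nat :=
  #|[set y in S | e x y]|.

Definition sparse_set (T : finType) (e : rel T) (k j : nat) (S : {set T}) : Prop :=
  #|S| = j /\ forall x, x \in S -> deg_in e S x <= k.

Definition compl_graph (T : finType) (e : rel T) : rel T :=
  fun x y => (x != y) && ~~ e x y.

Definition dense_set (T : finType) (e : rel T) (k i : nat) (S : {set T}) : Prop :=
  sparse_set (compl_graph e) k i S.

Definition induced_rel (T : finType) (e : rel T) (B : {set T}) : rel T :=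
  fun x y => [&& x \in B, y \in B & e x y].

(* G[B] is connected (the empty graph counts as connected). *)
Definition connected_in (T : finType) (e : rel T) (B : {set T}) : Prop :=
  forall x y, x \in B -> y \in B -> connect (induced_rel e B) x y.

Definition nonseparable_in (T : finType) (e : rel T) (B : {set T}) : Prop :=
  B != set0 /\ connected_in e B /\
  forall v, v \in B -> connected_in e (B :\ v).

(* B is (the vertex set of) a block: a maximal connected subgraph without a
   cut vertex (blocks are induced subgraphs). *)
Definition is_block (T : finType) (e : rel T) (B : {set T}) : Prop :=
  nonseparable_in e B /\
  forall B' : {set T}, B \subset B' -> nonseparable_in e B' -> B' = B.

Definition is_cycle_in (T : finType) (e : rel T) (B : {set T}) : Prop :=
  3 <= #|B| /\ connected_in e B /\ forall x, x \in B -> deg_in e B x = 2.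

Definition is_edge_in (T : finType) (e : rel T) (B : {set T}) : Prop :=
  exists x y, x != y /\ e x y /\ B = [set x; y].

Definition is_vertex_in (T : finType) (B : {set T}) : Prop :=
  exists x, B = [set x].

Definition cactus (T : finType) (e : rel T) : Prop :=
  forall B : {set T}, is_block e B -> [\/ is_cycle_in e B, is_edge_in e B | is_vertex_in B].

Definition graph_class := forall n : nat, rel 'I_n -> Prop.

Definition cacti : graph_class := fun n e => cactus e.

Definition ramsey_prop (cls : graph_class) (k i j n : nat) : Prop :=
  forall e : rel 'I_n, simple_graph e -> cls n e ->
    (exists S, dense_set e k i S) \/ (exists S, sparse_set e k j S).

(* R_k^G(i,j): the smallest n with ramsey_prop (arbitrary if none exists). *)
Definition ramsey_num (cls : graph_class) (k i j : nat) : nat :=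
  epsilon (inhabits 0%N)
    (fun n => ramsey_prop cls k i j n /\
              forall m, ramsey_prop cls k i j m -> n <= m).

(* Main.v *)
Require Import Defs.
From mathcomp Require Import all_boot.
From mathcomp Require Import zify.
From Stdlib Require Import ClassicalEpsilon.
Set Implicit Arguments. Unset Strict Implicit. Unset Printing Implicit Defensive.


Lemma induced_sym (T : finType) (e : rel T) (A : {set T}) :
  symmetric e -> symmetric (induced_rel e A).
Proof. by move=> es x y; rewrite /induced_rel es andbCA. Qed.

Lemma induced_sub (T : finType) (e : rel T) (A B : {set T}) :
  A \subset B -> subrel (induced_rel e A) (induced_rel e B).
Proof.
move=> /subsetP sAB x y /and3P[xA yA exy].
by rewrite /induced_rel (sAB x xA) (sAB y yA) exy.
Qed.

Lemma induced_e (T : finType) (e : rel T) (A : {set T}) :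
  subrel (induced_rel e A) e.
Proof. by move=> x y /and3P[]. Qed.

Lemma conn_sub (T : finType) (e : rel T) (A B : {set T}) x y :
  A \subset B -> connect (induced_rel e A) x y -> connect (induced_rel e B) x y.
Proof.
move=> sAB; apply: connect_sub => u w H; apply: connect1; exact: induced_sub H.
Qed.

Lemma conn_edge (T : finType) (e : rel T) (A : {set T}) x y :
  x \in A -> y \in A -> e x y -> connect (induced_rel e A) x y.
Proof. by move=> xA yA exy; apply: connect1; rewrite /induced_rel xA yA. Qed.

Lemma path_induced (T : finType) (e : rel T) (A : {set T}) x p : x \in A ->
  path (induced_rel e A) x p = path e x p && all (mem A) p.
Proof.
elim: p x => [|y p IH] x xA //=.
rewrite /induced_rel xA /=. case yA: (y \in A) => /=; last by rewrite !andbF.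
by rewrite IH // andbA.
Qed.

Lemma path_induced_all (T : finType) (e : rel T) (A : {set T}) x p :
  path (induced_rel e A) x p -> all (mem A) p.
Proof. elim: p x => [|y p IH] x //= /andP[/and3P[_ yA _] H]; by rewrite yA (IH y). Qed.

Lemma conn_first (T : finType) (e : rel T) (A : {set T}) x y :
  connect (induced_rel e A) x y -> x != y ->
  exists z, [/\ x \in A, z \in A, e x z & connect (induced_rel e A) z y].
Proof.
move=> /connectP[[|z p] /= Hp ->]; first by rewrite eqxx.
move=> _; case/andP: Hp => /and3P[xA zA exz] Hp; exists z; split => //.
by apply/connectP; exists p.
Qed.

Lemma conn_to_removed (T : finType) (e : rel T) (A : {set T}) u r :
  u != r -> ~~ connect (induced_rel e (A :\ r)) u r.
Proof.
move=> ur; apply/negP => /connectP[p Hp Hl].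
have: r \in u :: p by rewrite Hl mem_last.
rewrite inE eq_sym (negbTE ur) /= => rp.
by move: (allP (path_induced_all Hp) r rp); rewrite !inE eqxx.
Qed.

Lemma split_conn (T : finType) (e : rel T) (A : {set T}) w v r : v != w ->
  connect (induced_rel e A) w r -> ~~ connect (induced_rel e (A :\ v)) w r ->
  connect (induced_rel e (A :\ w)) v r.
Proof.
move=> vw /connectP[p0 Hp0 ->] Hn.
case: (shortenP Hp0) Hn => p Hp Hu _ Hn.
have wA : w \in A.
  case: p Hp {Hu} Hn => [|y p] /=; first by rewrite connect0.
  by case/andP => /and3P[].
have allA := path_induced_all Hp.
case vp: (v \in p); last first.
  case/negP: Hn; apply/connectP; exists p => //.
  rewrite path_induced ?inE ?wA ?(eq_sym w v) ?vw //.
  rewrite (sub_path (@induced_e _ _ _) Hp) /=.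
  apply/allP => y yp; have yA : y \in A := allP allA y yp.
  rewrite !inE yA andbT.
  by apply: contraFneq vp => <-.
case/splitPr: vp Hp Hu {Hn} allA => p1 p2 Hp Hu allA.
rewrite last_cat /=; apply/connectP; exists p2 => //.
have vA : v \in A by apply: (allP allA); rewrite mem_cat inE eqxx orbT.
rewrite path_induced ?inE ?vw ?vA //.
rewrite cat_path /= in Hp; case/and3P: Hp => _ _ Hp.
rewrite (sub_path (@induced_e _ _ _) Hp) /=.
apply/allP => y yp; rewrite !inE.
have yA : y \in A by apply: (allP allA y); rewrite mem_cat inE yp !orbT.
rewrite yA andbT.
move: Hu; rewrite /= mem_cat inE negb_or => /andP[/andP[_ /norP[_ wp2]] _].
by apply: contraNneq wp2 => <-.
Qed.


Lemma path_conn_set (T : finType) (e : rel T) (A : {set T}) x p :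
  path e x p -> x \in A -> all (mem A) p ->
  forall y, y \in x :: p -> connect (induced_rel e A) x y.
Proof. move=> Hp xA Hall y yp; apply: (path_connect _ yp). by rewrite path_induced // Hp. Qed.

Lemma cycle_nonsep (T : finType) (e : rel T) (s : seq T) :
  symmetric e -> uniq s -> cycle e s -> s != [::] ->
  nonseparable_in e [set x in s].
Proof.
move=> es us cs sn.
have csym : forall A : {set T}, connect_sym (induced_rel e A).
  by move=> A; apply: sym_connect_sym; apply: induced_sym.
split; first by case: s sn {us cs} => [|h t] // _; apply/set0Pn; exists h; rewrite inE inE eqxx.
split.
  case: s sn us cs => [|h t] // _ _ cs.
  move: cs; rewrite /= rcons_path => /andP[pt _].
  have sub : forall u, u \in h :: t -> connect (induced_rel e [set x in h :: t]) h u.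
    apply: path_conn_set => //; first by rewrite inE inE eqxx.
    by apply/allP => u ut; rewrite /= !inE ut orbT.
  move=> x y; rewrite !inE => xs ys.
  apply: connect_trans (sub y ys); by rewrite csym sub.
move=> v; rewrite inE => vs.
have := rot_index vs. set i := index v s. set rest := (drop _ _ ++ _) => Hr.
have cr : cycle e (v :: rest) by rewrite -Hr rot_cycle.
have ur : uniq (v :: rest) by rewrite -Hr rot_uniq.
have memr : forall y, (y \in [set x in s] :\ v) = (y \in rest).
  move=> y; rewrite !inE -(mem_rot i s) Hr inE.
  case: (eqVneq y v) => [->|yv] /=; last by [].
  by move: ur => /= /andP[/negbTE -> _].
move=> x y; rewrite !memr.
case: rest {Hr} cr ur memr => [|z rest] //= cr ur memr xr yr.
move: cr; rewrite rcons_path => /andP[_ /andP[pr _]].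
have sub : forall u, u \in z :: rest ->
    connect (induced_rel e ([set x in s] :\ v)) z u.
  apply: path_conn_set => //; first by rewrite memr inE eqxx.
  by apply/allP => u ur'; rewrite /= memr inE ur' orbT.
apply: connect_trans (sub y yr); by rewrite csym sub.
Qed.

Lemma conn_rem (T : finType) (e : rel T) (A : {set T}) v x y :
  nonseparable_in e A -> x \in A :\ v -> y \in A :\ v ->
  connect (induced_rel e (A :\ v)) x y.
Proof.
case=> _ [cA rA] xA yA. case vA: (v \in A); first exact: rA.
have sub : A \subset A :\ v.
  by apply/subsetP => u uA; rewrite !inE uA andbT; apply: contraFneq vA => <-.
apply: conn_sub sub (cA x y _ _).
  by move: xA; rewrite inE => /andP[].
by move: yA; rewrite inE => /andP[].
Qed.

Lemma nonsep_union (T : finType) (e : rel T) (A B : {set T}) a b : symmetric e ->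
  nonseparable_in e A -> nonseparable_in e B ->
  a \in A -> a \in B -> b \in A -> b \in B -> a != b ->
  nonseparable_in e (A :|: B).
Proof.
move=> es nA nB aA aB bA bB ab.
have csym : forall A : {set T}, connect_sym (induced_rel e A).
  by move=> C; apply: sym_connect_sym; apply: induced_sym.
have cA := nA.2.1. have cB := nB.2.1.
split; first by apply/set0Pn; exists a; rewrite inE aA.
split.
  have toa : forall x, x \in A :|: B -> connect (induced_rel e (A :|: B)) x a.
    move=> x; rewrite inE => /orP[xA|xB].
      by apply: conn_sub (cA x a xA aA); exact: subsetUl.
    by apply: conn_sub (cB x a xB aB); exact: subsetUr.
  move=> x y xU yU; apply: connect_trans (toa x xU) _.
  by rewrite csym toa.
move=> v vU.
have [c [cA' cB' cv]] : exists c, [/\ c \in A, c \in B & c != v].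
  case: (eqVneq a v) => [av|av]; last by exists a.
  by exists b; split => //; rewrite -av eq_sym.
have toc : forall x, x \in (A :|: B) :\ v ->
    connect (induced_rel e ((A :|: B) :\ v)) x c.
  move=> x; rewrite !inE => /andP[xv /orP[xA|xB]].
    apply: conn_sub (conn_rem nA _ _).
    - by apply: setSD; exact: subsetUl.
    - by rewrite !inE xv xA.
    - by rewrite !inE cv cA'.
  apply: conn_sub (conn_rem nB _ _).
  - by apply: setSD; exact: subsetUr.
  - by rewrite !inE xv xB.
  - by rewrite !inE cv cB'.
move=> x y xU yU; apply: connect_trans (toc x xU) _.
by rewrite csym toc.
Qed.

Lemma block_exists (T : finType) (e : rel T) (A : {set T}) :
  nonseparable_in e A -> exists B : {set T}, A \subset B /\ is_block e B.
Proof.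
move=> nA.
suff H : forall n (B : {set T}), #|T| - #|B| < n -> A \subset B ->
    nonseparable_in e B -> exists B' : {set T}, A \subset B' /\ is_block e B'.
  by apply: (H (#|T| - #|A|).+1 A) => //.
elim=> [|n IH] B // Hn AB nB.
case: (classic (exists B' : {set T}, [/\ B \subset B', nonseparable_in e B' & B' != B])).
  case=> B' [BB' nB' B'B].
  apply: (IH B') => //; last exact: subset_trans AB BB'.
  have lt : #|B| < #|B'| by apply: proper_card; rewrite properEneq eq_sym B'B.
  have mc : #|B'| <= #|T| := max_card B'. lia.
move=> Hno; exists B; split => //; split => // B' BB' nB'.
apply/eqP; apply/negPn/negP => H; apply: Hno; exists B'; split => //.
Qed.


Lemma deg_mono (T : finType) (e : rel T) (A B : {set T}) x :
  A \subset B -> deg_in e A x <= deg_in e B x.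
Proof.
move=> /subsetP sAB; apply: subset_leq_card; apply/subsetP => y.
by rewrite !inE => /andP[yA ->]; rewrite sAB.
Qed.

Lemma deg_le_card (T : finType) (e : rel T) (A : {set T}) x : deg_in e A x <= #|A|.
Proof. by apply: subset_leq_card; apply/subsetP => y; rewrite inE => /andP[]. Qed.

Lemma forb (T : finType) (e : rel T) (A : {set T}) x : cactus e ->
  nonseparable_in e A -> x \in A -> 2 < deg_in e A x -> False.
Proof.
move=> cac nA xA dA.
case: (block_exists nA) => B [AB bB].
have H := deg_mono e x AB.
case: (cac B bB) => [[_ [_ deg2]] | [a [b [_ [_ EB]]]] | [a EB]].
- have xB := subsetP AB x xA. rewrite deg2 // in H. lia.
- have := deg_le_card e B x. rewrite EB cards2 -EB. case: (a != b) => /=; lia.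
- have := deg_le_card e B x. rewrite EB cards1 -EB. lia.
Qed.

Lemma cycle_set (T : finType) (e : rel T) (S : {set T}) x u w :
  symmetric e -> irreflexive e ->
  e x u -> e w x -> connect (induced_rel e (S :\ x)) u w ->
  exists C : {set T}, [/\ nonseparable_in e C, x \in C, u \in C & w \in C].
Proof.
move=> es ei exu ewx /connectP[p0 Hp0 Hw]; subst w.
case: (shortenP Hp0) ewx => p Hp Hu _ ewx.
have allS := path_induced_all Hp.
exists [set y in x :: u :: p]; split; rewrite ?inE ?eqxx ?orbT //; last first.
  by rewrite -in_cons mem_last orbT.
apply: cycle_nonsep => //.
- rewrite cons_uniq Hu andbT in_cons negb_or; apply/andP; split.
    by apply: contraTneq exu => ->; rewrite ei.
  apply/negP => xp; move: (allP allS x xp); by rewrite !inE eqxx.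
- rewrite /= rcons_path exu (sub_path (@induced_e _ _ _) Hp) /=.
  by rewrite ewx.
Qed.

Lemma card3_sub (T : finType) (A : {set T}) u1 u2 u3 :
  u1 != u2 -> u2 != u3 -> u1 != u3 -> u1 \in A -> u2 \in A -> u3 \in A -> 2 < #|A|.
Proof.
move=> n12 n23 n13 a1 a2 a3.
rewrite (cardsD1 u1) a1 (cardsD1 u2 (A :\ u1)) !inE eq_sym n12 a2.
rewrite (cardsD1 u3 (A :\ u1 :\ u2)) !inE (eq_sym u3) n23 (eq_sym u3) n13 a3.
by [].
Qed.

Lemma three_nbrs (T : finType) (e : rel T) (S : {set T}) x u1 u2 u3 :
  symmetric e -> irreflexive e -> cactus e ->
  e x u1 -> e x u2 -> e x u3 -> u1 != u2 -> u2 != u3 -> u1 != u3 ->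
  connect (induced_rel e (S :\ x)) u1 u2 ->
  connect (induced_rel e (S :\ x)) u2 u3 -> False.
Proof.
move=> es ei cac e1 e2 e3 n12 n23 n13 c12 c23.
have [C1 [nC1 xC1 u1C1 u2C1]] := cycle_set es ei e1 (etrans (es _ _) e2) c12.
have [C2 [nC2 xC2 u2C2 u3C2]] := cycle_set es ei e2 (etrans (es _ _) e3) c23.
have xu2 : x != u2 by apply: contraTneq e2 => ->; rewrite ei.
have nU := nonsep_union es nC1 nC2 xC1 xC2 u2C1 u2C2 xu2.
apply: (forb cac nU (x:=x)); first by rewrite inE xC1.
apply: (card3_sub n12 n23 n13); by rewrite !inE ?u1C1 ?u2C1 ?u3C2 ?orbT ?e1 ?e2 ?e3.
Qed.


Definition Dn (T : finType) (e : rel T) (S : {set T}) (r x : T) : {set T} :=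
  [set u in S | [&& u != x, connect (induced_rel e S) u r &
                    ~~ connect (induced_rel e (S :\ x)) u r]].

Lemma DnP (T : finType) (e : rel T) (S : {set T}) r x u :
  u \in Dn e S r x ->
  [/\ u \in S, u != x, connect (induced_rel e S) u r &
      ~~ connect (induced_rel e (S :\ x)) u r].
Proof. by rewrite inE => /andP[-> /and3P[-> -> ->]]. Qed.

Lemma Dn_sub (T : finType) (e : rel T) (S : {set T}) r x : Dn e S r x \subset S.
Proof. by apply/subsetP => u /DnP[]. Qed.

Lemma Dn_nx (T : finType) (e : rel T) (S : {set T}) r x : x \notin Dn e S r x.
Proof. by apply/negP => /DnP[_ /eqP]. Qed.

Lemma Dn_nbr (T : finType) (e : rel T) (S : {set T}) r x w y : symmetric e ->
  w \in Dn e S r x -> y \in S -> e w y -> y != x -> y \in Dn e S r x.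
Proof.
move=> es /DnP[wS wx cw ncw] yS ewy yx.
rewrite inE yS yx /=.
rewrite (connect_trans (conn_edge yS wS _) cw) /=; last by rewrite es.
apply: contra ncw => cy; apply: connect_trans cy.
by apply: conn_edge; rewrite ?inE ?wx ?yx.
Qed.

Lemma Dn_antisym (T : finType) (e : rel T) (S : {set T}) r a b :
  a \in Dn e S r b -> b \in Dn e S r a -> False.
Proof.
move=> /DnP[aS ab ca nca] /DnP[bS ba cb ncb].
by move: (split_conn ba ca nca); rewrite (negbTE ncb).
Qed.

Lemma Dn_trans (T : finType) (e : rel T) (S : {set T}) r t v w :
  v \in Dn e S r t -> w \in Dn e S r v -> w \in Dn e S r t.
Proof.
move=> vt wv.
case/DnP: (vt) => vS vt' cv ncv.
case/DnP: (wv) => wS wv' cw ncw.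
rewrite inE wS cw /=.
apply/andP; split.
  apply/negP => /eqP wt; subst w; exact: (Dn_antisym vt wv).
apply/negP => H.
have H2 : ~~ connect (induced_rel e (S :\ t :\ v)) w r.
  apply: contra ncw; apply: conn_sub; apply/subsetP => u; rewrite !inE.
  by case/and3P => -> _ ->.
have vw : v != w by rewrite eq_sym.
have := split_conn vw H H2.
move=> H3; move: ncv; rewrite (conn_sub _ H3) //.
by apply/subsetP => u; rewrite !inE => /and3P[_ -> ->]; rewrite andbT.
Qed.

Lemma Dn_lt (T : finType) (e : rel T) (S : {set T}) r t v :
  v \in Dn e S r t -> #|Dn e S r v| < #|Dn e S r t|.
Proof.
move=> vt; apply: proper_card; apply/properP; split.
  by apply/subsetP => w wv; exact: Dn_trans vt wv.
by exists v => //; exact: Dn_nx.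
Qed.

Lemma on_path (T : finType) (e : rel T) (S : {set T}) u p a :
  path (induced_rel e S) u p -> a != u ->
  ~~ connect (induced_rel e (S :\ a)) u (last u p) -> a \in p.
Proof.
move=> Hp au Hn; apply/negPn/negP => ap; case/negP: Hn.
case: p Hp ap => [|y p] Hp ap; first by rewrite connect0.
have uS : u \in S by case/andP: Hp => /and3P[].
apply/connectP; exists (y :: p) => //.
have uSa : u \in S :\ a by rewrite !inE uS eq_sym au.
rewrite path_induced // (sub_path (@induced_e _ _ _) Hp) andTb.
apply/allP => z zp; have zS : z \in S := allP (path_induced_all Hp) z zp.
rewrite !inE zS andbT.
by apply: contraNneq ap => <-.
Qed.

Lemma Dn_before (T : finType) (e : rel T) (S : {set T}) r u q1 c q2 d :
  path (induced_rel e S) u (q1 ++ c :: q2) -> uniq (u :: q1 ++ c :: q2) ->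
  last u (q1 ++ c :: q2) = r -> d \in q2 -> u \in Dn e S r d -> c \in Dn e S r d.
Proof.
move=> Hp Hu Hl dq2 /DnP[uS ud cu ncu].
have allS := path_induced_all Hp.
have cS : c \in S by apply: (allP allS); rewrite mem_cat inE eqxx orbT.
move: Hu; rewrite /= mem_cat inE negb_or cat_uniq /=.
case/and5P => [_ _ /norP[_ hq] cq2 _].
move: Hp; rewrite cat_path /= => /and3P[Hp1 Hc Hp2].
rewrite inE cS /=; apply/and3P; split.
- by apply: contraNneq cq2 => ->.
- by apply/connectP; exists q2 => //; rewrite -Hl last_cat.
apply: contra ncu => H; apply: connect_trans H.
apply/connectP; exists (rcons q1 c); last by rewrite last_rcons.
have uSd : u \in S :\ d by rewrite !inE ud uS.
rewrite path_induced // rcons_path (sub_path (@induced_e _ _ _) Hp1) (induced_e Hc) /=.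
apply/allP => z; rewrite mem_rcons inE => /orP[/eqP->|zq1].
  by rewrite !inE cS andbT; apply: contraNneq cq2 => ->.
have zS : z \in S by apply: (allP allS z); rewrite mem_cat zq1.
rewrite !inE zS andbT; apply/eqP => zd; subst z.
by case/negP: hq; apply/hasP; exists d.
Qed.

Lemma Dn_compare (T : finType) (e : rel T) (S : {set T}) r u a b :
  u \in Dn e S r a -> u \in Dn e S r b -> a != b ->
  a \in Dn e S r b \/ b \in Dn e S r a.
Proof.
move=> ua ub ab.
case/DnP: (ua) => uS ua' cu nca. case/DnP: (ub) => _ ub' _ ncb.
move/connectP: cu => [p0 Hp0 Hl0].
case: (shortenP Hp0) Hl0 => p Hp Hu _ Hl.
have ap : a \in p by apply: (on_path Hp); [rewrite eq_sym | rewrite -Hl].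
have bp : b \in p by apply: (on_path Hp); [rewrite eq_sym | rewrite -Hl].
case/splitPr: ap Hp Hu Hl bp => p1 p2 Hp Hu Hl bp.
rewrite mem_cat inE eq_sym (negbTE ab) /= in bp.
case/orP: bp => [bp1|bp2].
- right. case/splitPr: bp1 Hp Hu Hl => q1 q2 Hp Hu Hl.
  rewrite -catA /= in Hp Hu Hl.
  apply: (Dn_before Hp Hu (esym Hl) _ ua).
  by rewrite mem_cat inE eqxx orbT.
- left. exact: (Dn_before Hp Hu (esym Hl) bp2 ub).
Qed.

Lemma three_elems (T : finType) (A : {set T}) : 2 < #|A| ->
  exists y1 y2 y3, [/\ y1 \in A, y2 \in A & y3 \in A] /\ [/\ y1 != y2, y2 != y3 & y1 != y3].
Proof.
move=> H.
have [y1 y1A] : exists y1, y1 \in A by apply/set0Pn; rewrite -card_gt0; lia.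
have H1 := cardsD1 y1 A; rewrite y1A /= in H1.
have [y2 y2A] : exists y2, y2 \in A :\ y1 by apply/set0Pn; rewrite -card_gt0; lia.
have H2 := cardsD1 y2 (A :\ y1); rewrite y2A /= in H2.
have [y3 y3A] : exists y3, y3 \in A :\ y1 :\ y2 by apply/set0Pn; rewrite -card_gt0; lia.
move: y2A y3A; rewrite !inE => /andP[n21 y2A] /and3P[n32 n31 y3A].
by exists y1, y2, y3; split; split => //; rewrite eq_sym.
Qed.

Definition Up (T : finType) (e : rel T) (S : {set T}) (r v : T) : {set T} :=
  [set y in S | e v y & y \notin Dn e S r v].

Lemma up_conn (T : finType) (e : rel T) (S : {set T}) r v y :
  symmetric e -> irreflexive e -> v \in S -> connect (induced_rel e S) v r ->
  y \in Up e S r v -> connect (induced_rel e (S :\ v)) y r.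
Proof.
move=> es ei vS cv; rewrite inE => /and3P[yS evy ny].
have yv : y != v by apply: contraTneq evy => ->; rewrite ei.
have cy : connect (induced_rel e S) y r.
  by apply: connect_trans cv; apply: conn_edge; rewrite // es.
by move: ny; rewrite inE yS yv cy /= => /negbNE.
Qed.

Lemma up_le2 (T : finType) (e : rel T) (S : {set T}) r v :
  symmetric e -> irreflexive e -> cactus e -> v \in S ->
  connect (induced_rel e S) v r -> #|Up e S r v| <= 2.
Proof.
move=> es ei cac vS cv; rewrite leqNgt; apply/negP.
move=> /three_elems [y1 [y2 [y3 [[h1 h2 h3] [n12 n23 n13]]]]].
have c1 := up_conn es ei vS cv h1.
have c2 := up_conn es ei vS cv h2.
have c3 := up_conn es ei vS cv h3.
have csym := sym_connect_sym (induced_sym (S :\ v) es).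
have ev : forall y, y \in Up e S r v -> e v y by move=> y; rewrite inE => /and3P[].
apply: (three_nbrs es ei cac (ev _ h1) (ev _ h2) (ev _ h3) n12 n23 n13).
  by apply: connect_trans c1 _; rewrite csym.
by apply: connect_trans c2 _; rewrite csym.
Qed.

Lemma deg_split (T : finType) (e : rel T) (S : {set T}) r v :
  deg_in e S v <= #|Dn e S r v| + #|Up e S r v|.
Proof.
have sub : [set y in S | e v y] \subset Dn e S r v :|: Up e S r v.
  apply/subsetP => y; rewrite inE => /andP[yS evy]; rewrite in_setU.
  case yD: (y \in Dn e S r v) => //=.
  by rewrite /Up inE yS evy yD.
have := subset_leq_card sub. rewrite cardsU /deg_in. lia.
Qed.

Lemma deg_rem (T : finType) (e : rel T) (S : {set T}) x a :
  a \in S -> e x a -> deg_in e S x = (deg_in e (S :\ a) x).+1.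
Proof.
move=> aS exa; rewrite /deg_in (cardsD1 a) inE aS exa /=.
congr (_.+1); apply: eq_card => y; rewrite !inE.
by rewrite andbA.
Qed.


Definition valid_red (T : finType) (e : rel T) (S X : {set T}) (z : T) (k : nat) :=
  [/\ X \subset S, z \in X, k.+1 <= #|X|,
      forall x, x \in X :\ z -> deg_in e (S :\ z) x <= k &
      forall y x, y \in S :\: X -> x \in X :\ z -> e x y -> deg_in e (S :\ z) y <= k].

Lemma reduction (T : finType) (e : rel T) (S : {set T}) k :
  symmetric e -> irreflexive e -> cactus e -> 2 <= k ->
  (exists b, b \in S /\ k < deg_in e S b) -> exists X z, valid_red e S X z k.
Proof.
move=> es ei cac k2 [b [bS bbad]].
have [r rN] : exists r, r \in [set y in S | e b y].
  by apply/set0Pn; rewrite -card_gt0; rewrite /deg_in in bbad; clear -bbad; lia.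
move: rN; rewrite inE => /andP[rS ebr].
have bDr : b \in Dn e S r r.
  have br : b != r by apply: contraTneq ebr => ->; rewrite ei.
  rewrite /Dn inE bS br (conn_edge bS rS ebr) /=.
  exact: conn_to_removed.
pose Pb t := [exists u in Dn e S r t, k < deg_in e S u].
have Pr : Pb r by apply/existsP; exists b; rewrite bDr.
case: (arg_minnP (fun t => #|Dn e S r t|) Pr) => t Pt Hmin.
have F1 : forall w, w \in Dn e S r t -> forall u, u \in Dn e S r w ->
    deg_in e S u <= k.
  move=> w wt u uw; rewrite leqNgt; apply/negP => ubad.
  have Pw : Pb w by apply/existsP; exists u; rewrite uw.
  have h1 := Hmin w Pw; have h2 := Dn_lt wt; clear -h1 h2; lia.
have Dt_conn : forall x, x \in Dn e S r t ->
    x \in S /\ connect (induced_rel e S) x r.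
  by move=> x /DnP[].
have DnS : forall x u, u \in Dn e S r x -> u \in S by move=> x u /DnP[].
have generic : forall x, x \in Dn e S r t -> k <= #|Dn e S r x| ->
    exists X z, valid_red e S X z k.
  move=> x xt kD; case: (Dt_conn x xt) => xS _.
  exists (x |: Dn e S r x), x; split.
  - by rewrite subUset sub1set xS Dn_sub.
  - by rewrite setU11.
  - by rewrite cardsU1 Dn_nx /=; clear -kD; lia.
  - move=> u; rewrite in_setD1 in_setU1 => /andP[ux /orP[/eqP uxe|uD]].
      by rewrite uxe eqxx in ux.
    exact: leq_trans (deg_mono _ _ (subD1set S x)) (F1 x xt u uD).
  - move=> y u; rewrite in_setD !in_setD1 !in_setU1 => /andP[yn yS].
    move=> /andP[ux /orP[/eqP uxe|uD]] euy; first by rewrite uxe eqxx in ux.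
    move: yn; rewrite negb_or => /andP[yx yD].
    by rewrite (Dn_nbr es uD yS euy yx) in yD.
move: Pt => /existsP[v /andP[vt vbad]].
case: (Dt_conn v vt) => vS cv.
case: (leqP k #|Dn e S r v|) => [kv|vk]; first exact: generic vt kv.
have dv := deg_split e S r v.
have U2 := up_le2 es ei cac vS cv.
have /cards2P [p [q [pq EU]]] : #|Up e S r v| == 2 by apply/eqP; clear -dv U2 vk vbad; lia.
have UpP : forall y, y \in Up e S r v ->
    [/\ y \in S, e v y & y \notin Dn e S r v].
  by move=> y; rewrite /Up inE => /and3P[].
have degv : deg_in e S v = k.+1 by clear -dv U2 vk vbad; lia.
have Dv : #|Dn e S r v| = k.-1 by clear -dv U2 vk vbad; lia.
have low_case : forall a c, a != c -> Up e S r v = [set a; c] ->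
    deg_in e S c <= k -> exists X z, valid_red e S X z k.
  move=> a c ac EU' clow.
  have aU : a \in Up e S r v by rewrite EU' !inE eqxx.
  case: (UpP a aU) => aS eva aD.
  have av : a != v by apply: contraTneq eva => ->; rewrite ei.
  exists (a |: (v |: Dn e S r v)), a; split.
  - by rewrite !subUset !sub1set aS vS Dn_sub.
  - by rewrite setU11.
  - rewrite cardsU1 cardsU1 Dn_nx in_setU1 (negbTE av) (negbTE aD) /= Dv; clear -k2; lia.
  - move=> u; rewrite in_setD1 !in_setU1 => /andP[ua /orP[/eqP uae|/orP[/eqP uv|uD]]].
    + by rewrite uae eqxx in ua.
    + subst u; have h := deg_rem aS eva; clear -h degv; lia.
    + exact: leq_trans (deg_mono _ _ (subD1set S a)) (F1 v vt u uD).
  - move=> y u; rewrite in_setD !in_setD1 !in_setU1 => /andP[yn yS].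
    move: yn; rewrite !negb_or => /and3P[ya yv yD].
    move=> /andP[ua /orP[/eqP uae|/orP[/eqP uv|uD]]] euy.
    + by rewrite uae eqxx in ua.
    + subst u.
      have : y \in Up e S r v by rewrite /Up inE yS euy yD.
      rewrite EU' !inE (negbTE ya) /= => /eqP ->.
      exact: leq_trans (deg_mono _ _ (subD1set S a)) clow.
    + by rewrite (Dn_nbr es uD yS euy yv) in yD.
case: (leqP (deg_in e S q) k) => [qlow|qhigh]; first exact: low_case pq EU qlow.
case: (leqP (deg_in e S p) k) => [plow|phigh].
  by apply: (low_case q p); rewrite 1?eq_sym // EU setUC.
have pU : p \in Up e S r v by rewrite EU !inE eqxx.
have qU : q \in Up e S r v by rewrite EU !inE eqxx orbT.
have high_case : forall c, c \in Up e S r v -> v \notin Dn e S r c ->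
    k < deg_in e S c -> exists X z, valid_red e S X z k.
  move=> c cU vDc chigh.
  case: (UpP c cU) => cS evc cD.
  have ct : c != t by apply: contraNneq vDc => ->.
  have cDt : c \in Dn e S r t := Dn_nbr es vt cS evc ct.
  case: (leqP k #|Dn e S r c|) => [kc|ck]; first exact: generic cDt kc.
  case: (Dt_conn c cDt) => _ cc.
  have dc := deg_split e S r c.
  have U2c := up_le2 es ei cac cS cc.
  have vc : v != c by apply: contraTneq evc => ->; rewrite ei.
  have disj : forall u, u \in Dn e S r v -> u \in Dn e S r c -> False.
    move=> u uv uc; case: (Dn_compare uv uc vc) => H.
      by rewrite H in vDc.
    by rewrite H in cD.
  have I0 : #|Dn e S r v :&: Dn e S r c| = 0.
    apply/eqP; rewrite cards_eq0; apply/eqP/setP => u.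
    rewrite in_setI in_set0; apply/negP => /andP[uv uc]; exact: disj uv uc.
  exists (v |: (Dn e S r v :|: Dn e S r c)), v; split.
  - by rewrite !subUset !sub1set vS !Dn_sub.
  - by rewrite setU11.
  - rewrite cardsU1 in_setU (negbTE (Dn_nx e S r v)) (negbTE vDc) /= cardsU I0; clear -dc U2c ck chigh Dv k2; lia.
  - move=> u; rewrite in_setD1 in_setU1 in_setU => /andP[uv /orP[/eqP uve|/orP[uD|uD]]].
    + by rewrite uve eqxx in uv.
    + exact: leq_trans (deg_mono _ _ (subD1set S v)) (F1 v vt u uD).
    + exact: leq_trans (deg_mono _ _ (subD1set S v)) (F1 c cDt u uD).
  - move=> y u; rewrite in_setD in_setU1 in_setU in_setD1 in_setU1 in_setU => /andP[yn yS].
    move: yn; rewrite !negb_or => /and3P[yv yDv yDc].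
    move=> /andP[uv /orP[/eqP uve|/orP[uD|uD]]] euy.
    + by rewrite uve eqxx in uv.
    + by rewrite (Dn_nbr es uD yS euy yv) in yDv.
    + case: (eqVneq y c) => [yc|yc].
        subst y. have h := deg_rem vS (etrans (es _ _) evc). clear -h dc U2c ck chigh; lia.
      by rewrite (Dn_nbr es uD yS euy yc) in yDc.
have nboth : ~~ ((v \in Dn e S r p) && (v \in Dn e S r q)).
  apply/negP => /andP[vp vq].
  case: (UpP p pU) => pS evp _. case: (UpP q qU) => qS evq _.
  have := Dn_nbr es vq pS evp pq.
  have qp : q != p by rewrite eq_sym.
  have := Dn_nbr es vp qS evq qp.
  move=> H1 H2; exact: (Dn_antisym H1 H2).
case vDp: (v \in Dn e S r p).
  by apply: (high_case q qU) => //; move: nboth; rewrite vDp.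
by apply: (high_case p pU) => //; rewrite vDp.
Qed.


Lemma KL (T : finType) (e : rel T) k : symmetric e -> irreflexive e -> cactus e ->
  2 <= k -> forall S : {set T}, exists D : {set T},
  [/\ D \subset S, k.+1 * #|D| <= #|S| - 1 &
     forall x, x \in S :\: D -> deg_in e (S :\: D) x <= k].
Proof.
move=> es ei cac k2 S.
move: {2}#|S| (leqnn #|S|) => n; elim: n S => [|n IH] S Sn.
  exists set0; split; rewrite ?sub0set ?cards0 ?muln0 //.
  move=> x; rewrite setD0 => xS.
  by move: Sn; rewrite leqn0 cards_eq0 => /eqP SE; rewrite SE inE in xS.
case: (boolP [exists b in S, k < deg_in e S b]); last first.
  move=> nob; exists set0; split; rewrite ?sub0set ?cards0 ?muln0 //.
  move=> x; rewrite setD0 => xS; rewrite leqNgt; apply/negP => H.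
  by case/negP: nob; apply/existsP; exists x; rewrite xS H.
move=> /existsP[b /andP[bS bb]].
have [X [z [XS zX cX HX HY]]] := reduction es ei cac k2 (ex_intro _ b (conj bS bb)).
have cSX : #|S :\: X| = #|S| - #|X|.
  by rewrite cardsD (setIidPr XS).
have XSc : #|X| <= #|S| := subset_leq_card XS.
have bnd : deg_in e S b <= #|S| - 1.
  rewrite (cardsD1 b S) bS /=.
  have : [set y in S | e b y] \subset S :\ b.
    apply/subsetP => y; rewrite !inE => /andP[-> eby]; rewrite andbT.
    by apply: contraTneq eby => ->; rewrite ei.
  move/subset_leq_card; rewrite /deg_in; clear; lia.
have [D' [D'S cD' HD']] := IH (S :\: X) ltac:(clear -Sn cSX cX; lia).
exists (z |: D'); split.
- rewrite subUset sub1set (subsetP XS z zX) /=.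
  by apply: subset_trans D'S (subsetDl S X).
- have c1 : #|z |: D'| <= #|D'|.+1 by rewrite cardsU1; case: (z \notin D').
  have c2 : k.+1 * #|z |: D'| <= k.+1 * #|D'|.+1 by rewrite leq_mul2l c1 orbT.
  rewrite mulnS in c2.
  move: c2 cD'; rewrite cSX.
  move: (k.+1 * #|z |: D'|) (k.+1 * #|D'|) => m1 m2.
  clear -cX XSc bb bnd; lia.
- move=> x; rewrite in_setD in_setU1 negb_or => /andP[/andP[xz xD'] xS].
  have sub1 : S :\: (z |: D') \subset S :\ z.
    apply/subsetP => y; rewrite !inE negb_or => /andP[/andP[-> _] ->] //.
  case xX: (x \in X).
    apply: leq_trans (deg_mono e x sub1) _.
    by apply: HX; rewrite in_setD1 xz xX.
  case: (boolP [exists u in X :\ z, e u x]).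
    move=> /existsP[u /andP[uX eux]].
    apply: leq_trans (deg_mono e x sub1) _.
    by apply: (HY x u) => //; rewrite in_setD xX xS.
  move=> nadj.
  apply: leq_trans (HD' x _); last by rewrite !in_setD xD' xX xS.
  apply: subset_leq_card; apply/subsetP => y; rewrite !inE negb_or.
  case/andP => /andP[/andP[yz yD'] yS] exy.
  rewrite yD' yS exy /= !andbT.
  apply/negP => yX; case/negP: nadj; apply/existsP; exists y.
  by rewrite in_setD1 yz yX es.
Qed.


Lemma arith_up k j d : 1 <= k -> 2 <= j ->
  k.+1 * d <= j - 1 + (j - 1 + (k - 1)) %/ k - 1 ->
  d <= j - 1 + (j - 1 + (k - 1)) %/ k - j.
Proof.
move=> k1 j2.
set c := (j - 1 + (k - 1)) %/ k.
have Hc : j - 1 <= c * k.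
  have := divn_eq (j - 1 + (k - 1)) k; rewrite -/c.
  have := ltn_pmod (j - 1 + (k - 1)) k1.
  move: ((j - 1 + (k - 1)) %% k) => rm.
  move: (c * k) => ck. lia.
case: (leqP c d) => cd; last by move=> _; lia.
have H : k.+1 * c <= k.+1 * d by rewrite leq_mul2l cd orbT.
rewrite mulSn mulnC in H.
move: H Hc; move: (c * k) (k.+1 * d) => ck kd. lia.
Qed.

Lemma sparse_sub (T : finType) (e : rel T) k j (S0 : {set T}) :
  j <= #|S0| -> (forall x, x \in S0 -> deg_in e S0 x <= k) ->
  exists S, sparse_set e k j S.
Proof.
move=> jS Hd.
exists [set x in take j (enum S0)]; split.
  have /card_uniqP Hs : uniq (take j (enum S0)) by rewrite take_uniq // enum_uniq.
  by rewrite cardsE Hs size_takel // -cardE.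
have sub : [set x in take j (enum S0)] \subset S0.
  by apply/subsetP => x; rewrite inE => /mem_take; rewrite mem_enum.
move=> x xS; apply: leq_trans (deg_mono e x sub) _.
by apply: Hd; apply: (subsetP sub).
Qed.

Lemma upper (k j : nat) : 4 <= k -> k + 2 <= j ->
  ramsey_prop cacti k (k + 3) j (j - 1 + (j - 1 + (k - 1)) %/ k).
Proof.
move=> k4 kj e [es ei] cac; right.
have k2 : 2 <= k by lia.
have [D [_ HD Hdeg]] := KL es ei cac k2 [set: 'I_(j - 1 + (j - 1 + (k - 1)) %/ k)].
apply: (sparse_sub (S0 := [set: _] :\: D)) => //.
rewrite cardsD setTI cardsT card_ord.
rewrite cardsT card_ord in HD.
have H1 := arith_up (d := #|D|) (ltac:(lia) : 1 <= k) (ltac:(lia) : 2 <= j) HD.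
have H2 : #|D| <= j - 1 + (j - 1 + (k - 1)) %/ k.
  by have := max_card (mem D); rewrite card_ord.
have H3 : 0 < (j - 1 + (k - 1)) %/ k by rewrite divn_gt0; lia.
set cc := (j - 1 + (k - 1)) %/ k in H1 H2 H3 *.
set dd := #|D| in H1 H2 *.
clear -H1 H2 H3 kj; lia.
Qed.


Definition starE (m d n : nat) : rel 'I_n := fun a b =>
  [&& a != b, (a < d * m)%N, (b < d * m)%N, a %/ m == b %/ m &
      (a %% m == 0) || (b %% m == 0)].
Arguments starE : clear implicits.

Lemma star_simple (m d n : nat) : simple_graph (starE m d n).
Proof.
split.
  move=> a b; rewrite /starE eq_sym (eq_sym (a %/ m)) orbC.
  by case: (a < d * m); case: (b < d * m); rewrite ?andbF.
by move=> a; rewrite /starE eqxx.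
Qed.

Lemma centers_eq (m n : nat) (a b : 'I_n) :
  a %/ m = b %/ m -> a %% m = 0 -> b %% m = 0 -> a = b.
Proof.
move=> q ra rb; apply: val_inj => /=.
by rewrite (divn_eq a m) (divn_eq b m) q ra rb.
Qed.

Lemma noncenter_nbr (m d n : nat) (x y1 y2 : 'I_n) : x %% m != 0 ->
  starE m d n x y1 -> starE m d n x y2 -> y1 = y2.
Proof.
move=> xc /and5P[_ _ _ /eqP q1 o1] /and5P[_ _ _ /eqP q2 o2].
rewrite (negbTE xc) /= in o1 o2.
apply: (centers_eq (m := m)); [by rewrite -q1 -q2 | exact/eqP | exact/eqP].
Qed.

Lemma center_nbr (m d n : nat) (x y : 'I_n) : x %% m == 0 -> starE m d n x y -> y %% m != 0.
Proof.
move=> xc /and5P[xy _ _ /eqP q _]; apply/negP => yc.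
by move: xy; rewrite (centers_eq q (eqP xc) (eqP yc)) eqxx.
Qed.

Lemma noncenter_deg (m d n : nat) (S : {set 'I_n}) (x : 'I_n) : x %% m != 0 ->
  deg_in (starE m d n) S x <= 1.
Proof.
move=> xc; apply/card_le1_eqP => y1 y2; rewrite !inE => /andP[_ h1] /andP[_ h2].
by rewrite /all_equal_to (noncenter_nbr xc h1 h2).
Qed.

Lemma star_nodense (m d n k : nat) (S : {set 'I_n}) : ~ dense_set (starE m d n) k (k + 3) S.
Proof.
case=> cS Hc.
have deg2 : forall x, x \in S -> 2 <= deg_in (starE m d n) S x.
  move=> x xS; have := Hc x xS.
  have sub : S \subset [set y in S | starE m d n x y] :|:
                        [set y in S | compl_graph (starE m d n) x y] :|: [set x].
    apply/subsetP => y yS; rewrite !inE yS /= /compl_graph.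
    case: (eqVneq x y) => [->|xy]; first by apply/orP; right; apply/eqP.
    by rewrite /=; case: (starE m d n x y).
  have := subset_leq_card sub.
  rewrite cS /deg_in. move=> H1 H2.
  rewrite !cardsU cards1 in H1. rewrite /deg_in. clear -H1 H2.
  set a := #|[set y in S | starE m d n x y]| in H1 *.
  set b := #|[set y in S | compl_graph (starE m d n) x y]| in H1 H2.
  lia.
have [x0 x0S] : exists x0, x0 \in S by apply/set0Pn; rewrite -card_gt0 cS; lia.
have [x [xS xc]] : exists x, x \in S /\ x %% m != 0.
  case: (boolP (x0 %% m == 0)) => [c0|c0]; last by exists x0.
  have : 0 < deg_in (starE m d n) S x0 by have := deg2 x0 x0S; lia.
  rewrite /deg_in card_gt0 => /set0Pn [y]; rewrite inE => /andP[yS ey].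
  by exists y; split => //; exact: center_nbr c0 ey.
have h1 := deg2 x xS; have h2 := @noncenter_deg m d n S x xc; clear -h1 h2; lia.
Qed.

Lemma star_cactus (m d n : nat) : cactus (starE m d n).
Proof.
move=> B [[nB [cB rB]] _].
have [es ei] := star_simple m d n.
have nbr_in : 1 < #|B| -> forall x, x \in B -> exists y, y \in B /\ starE m d n x y.
  move=> B2 x xB.
  have [y yB] : exists y, y \in B :\ x.
    apply/set0Pn; rewrite -card_gt0; have := cardsD1 x B; rewrite xB /= => h; by move: B2; rewrite h add1n ltnS.
  move: yB; rewrite in_setD1 => /andP[yx yB].
  have xy : x != y by rewrite eq_sym.
  have [z [_ zB exz _]] := conn_first (cB x y xB yB) xy.
  by exists z.
case: (leqP #|B| 2) => HB.
  have Hpos : 0 < #|B| by rewrite card_gt0.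
  have : (#|B| == 1) || (#|B| == 2) by move: Hpos HB; case: #|B| => [|[|[|c]]].
  case/orP => [/cards1P [x ->]|/cards2P [a [b [ab EB]]]].
    by apply: Or33; exists x.
  have aB : a \in B by rewrite EB !inE eqxx.
  have bB : b \in B by rewrite EB !inE eqxx orbT.
  have [z [_ zB eaz _]] := conn_first (cB a b aB bB) ab.
  have za : z != a by apply: contraTneq eaz => ->; rewrite ei.
  move: zB; rewrite EB !inE (negbTE za) /= => /eqP zb; subst z.
  by apply: Or32; exists a, b.
exfalso.
have [x0 x0B] : exists x0, x0 \in B by apply/set0Pn.
have [l [lB lc]] : exists l, l \in B /\ l %% m != 0.
  case: (boolP (x0 %% m == 0)) => [c0|c0]; last by exists x0.
  have [y [yB ey]] := nbr_in (ltnW HB) x0 x0B.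
  by exists y; split => //; exact: center_nbr c0 ey.
have [c [cB' elc]] := nbr_in (ltnW HB) l lB.
have lcn : l != c by apply: contraTneq elc => ->; rewrite ei.
have [y yB] : exists y, y \in B :\ l :\ c.
  apply/set0Pn; rewrite -card_gt0.
  have := cardsD1 l B; rewrite lB /=.
  have := cardsD1 c (B :\ l); rewrite in_setD1 eq_sym lcn cB' /=.
  by move=> h1 h2; move: HB; rewrite h2 h1 !add1n !ltnS.
move: yB; rewrite !in_setD1 => /andP[yc /andP[yl yB]].
have lBc : l \in B :\ c by rewrite in_setD1 lcn lB.
have yBc : y \in B :\ c by rewrite in_setD1 yc yB.
have ly : l != y by rewrite eq_sym.
have [z [_ zBc elz _]] := conn_first (rB c cB' l y lBc yBc) ly.
have zc := noncenter_nbr lc elz elc.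
by move: zBc; rewrite zc in_setD1 eqxx.
Qed.

Lemma gbound (k d : nat) (s : 'I_d) (i : 'I_k.+2) : s * k.+2 + i < d * k.+2.
Proof.
have h1 : s.+1 * k.+2 <= d * k.+2 by rewrite leq_mul2r ltn_ord orbT.
rewrite mulSn in h1. have := ltn_ord i.
move: (s * k.+2) (d * k.+2) h1 => a b. lia.
Qed.

Lemma star_nosparse (k d n j : nat) (S : {set 'I_n}) : d * k.+2 <= n ->
  sparse_set (starE k.+2 d n) k j S -> j <= n - d.
Proof.
move=> dn [cS Hd].
have miss : forall s : 'I_d, exists a : 'I_n, a \notin S /\ a %/ k.+2 = s.
  move=> s.
  pose g (i : 'I_k.+2) : 'I_n := Ordinal (leq_trans (gbound s i) dn).
  have gq : forall i, g i %/ k.+2 = s.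
    by move=> i; rewrite /g /= divnMDl // divn_small ?addn0.
  have gr : forall i, g i %% k.+2 = i.
    by move=> i; rewrite /g /= modnMDl modn_small.
  case: (boolP ([set g i | i : 'I_k.+2] \subset S)) => [sub|]; last first.
    case/subsetPn => a /imsetP [i _ ->] aS.
    by exists (g i); split => //; rewrite gq.
  exfalso.
  have cS' : g ord0 \in S by apply: (subsetP sub); apply: imset_f.
  have := Hd _ cS'.
  have ginj : injective (fun i : 'I_k.+1 => g (lift ord0 i)).
    move=> i1 i2 /(congr1 val) /=; rewrite /bump /= !add1n => /eqP.
    by rewrite eqn_add2l eqSS => /eqP /val_inj.
  have : [set g (lift ord0 i) | i : 'I_k.+1] \subset
         [set y in S | starE k.+2 d n (g ord0) y].
    apply/subsetP => y /imsetP [i _ ->]; rewrite inE.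
    rewrite (subsetP sub) ?imset_f //=.
    have b1 : g ord0 < d * k.+2 := gbound s ord0.
    have b2 : g (lift ord0 i) < d * k.+2 := gbound s (lift ord0 i).
    rewrite /starE !gq !gr eqxx b1 b2 /= !andbT.
    apply/negP => /eqP /(congr1 val) /=; rewrite /bump /= addn0 add1n => /eqP.
    by rewrite -{1}(addn0 (s * k.+2)) eqn_add2l.
  move/subset_leq_card; rewrite card_imset // card_ord /deg_in.
  by move=> h1 /(leq_trans h1); rewrite ltnn.
pose f (a : 'I_n) : 'I_d.+1 := inord (a %/ k.+2).
have sub : [set (inord s : 'I_d.+1) | s : 'I_d] \subset f @: (~: S).
  apply/subsetP => y /imsetP [s _ ->].
  have [a [aS aq]] := miss s.
  by apply/imsetP; exists a; rewrite ?inE // /f aq.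
have injd : injective (fun s : 'I_d => (inord s : 'I_d.+1)).
  move=> s1 s2 /(congr1 val) /=; rewrite !inordK; last 2 first.
  - by apply: leqW; apply: ltn_ord.
  - by apply: leqW; apply: ltn_ord.
  by move=> /val_inj.
have := subset_leq_card sub; rewrite card_imset // card_ord.
have := leq_imset_card f (~: S).
have := cardsC S; rewrite card_ord cS.
move: #|~: S| #|f @: ~: S| => a b. lia.
Qed.


Lemma min_exists (P : nat -> Prop) n0 : P n0 ->
  exists n, P n /\ forall m, P m -> n <= m.
Proof.
move: {2}n0 (leqnn n0) => N; elim: N n0 => [|N IH] n0 Hn P0.
  exists n0; split => // m _; move: Hn; rewrite leqn0 => /eqP ->; exact: leq0n.
case: (classic (exists m, m < n0 /\ P m)) => [[m [mn Pm]]|H].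
  by apply: (IH m) => //; lia.
exists n0; split => // m Pm; rewrite leqNgt; apply/negP => mn; apply: H.
by exists m.
Qed.

Lemma ramsey_spec cls k i j n0 : ramsey_prop cls k i j n0 ->
  ramsey_prop cls k i j (ramsey_num cls k i j) /\
  forall m, ramsey_prop cls k i j m -> ramsey_num cls k i j <= m.
Proof. move=> H; exact: (epsilon_spec (inhabits 0) _ (min_exists H)). Qed.

Lemma lower k j n : 4 <= k -> k + 2 <= j -> n <= j - 1 + (j - 1) %/ (k + 1) ->
  ~ ramsey_prop cacti k (k + 3) j n.
Proof.
move=> k4 kj nb H.
pose d := n - (j - 1).
have dn : d * k.+2 <= n.
  case: (leqP (j - 1) n) => hn; last first.
    have d0 : d = 0 by rewrite /d; lia.
    by rewrite d0 mul0n.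
  have q : (j - 1) %/ (k + 1) * (k + 1) <= j - 1 := leq_trunc_div _ _.
  have dq : d <= (j - 1) %/ (k + 1) by rewrite /d; lia.
  have h : d * (k + 1) <= (j - 1) %/ (k + 1) * (k + 1) by rewrite leq_mul2r dq orbT.
  have e1 : d * k.+2 = d * (k + 1) + d by rewrite -mulnSr addn1.
  rewrite e1.
  move: (d * (k + 1)) ((j - 1) %/ (k + 1) * (k + 1)) h q => a b h q.
  rewrite /d; clear -h q hn; lia.
case: (H (starE k.+2 d n) (star_simple k.+2 d n) (@star_cactus k.+2 d n)) => [[S HS]|[S HS]].
  exact: star_nodense HS.
have := star_nosparse dn HS; rewrite /d; lia.
Qed.

Theorem corollary4p2 (k j : nat) :
  4 <= k -> k + 2 <= j ->
  j + (j - 1) %/ (k + 1) <= ramsey_num cacti k (k + 3) j /\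
  ramsey_num cacti k (k + 3) j <= j - 1 + (j - 1 + (k - 1)) %/ k.
Proof.
move=> k4 kj.
have [Hp Hmin] := ramsey_spec (upper k4 kj).
split; last exact: Hmin (upper k4 kj).
rewrite leqNgt; apply/negP => Hlt.
apply: (lower k4 kj _ Hp).
move: Hlt; move: (ramsey_num cacti k (k + 3) j) ((j - 1) %/ (k + 1)) => a b.
lia.
Qed.
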